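(* Let $n\ge1$ and $\pi\in L_{n+1}$. Then there exist unique elements $\pi_j\in R_j^L$, $0\le j\le n-1$, such that $\pi=\pi_0\pi_1\cdots\pi_{n-1}$.
   Context: $B_m$ is the group of bijections $\sigma$ of $\{\pm1,\dots,\pm m\}$ with $\sigma(-i)=-\sigma(i)$, written in window notation $[\sigma(1),\dots,\sigma(m)]$, with product $(\sigma\tau)(i)=\sigma(\tau(i))$. Let $s_0=[-1,2,\dots,m]$ and $s_i=$ the transposition of $i$ and $i+1$. For $\sigma\in B_m$ let $|\sigma|$ be the permutation $i\mapsto|\sigma(i)|$, and $L_m=\{\sigma\in B_m:|\sigma|\text{ is even}\}$. In $L_{n+1}$ let $a_0=s_0$ and $a_i=s_1s_{i+1}$ for $1\le i\le n-1$. Let $R_0^L=\{1,\ a_0,\ a_1a_0a_1^{-1},\ a_0a_1a_0a_1^{-1}\}$ (here, when $n=1$, $a_1$ denotes $s_1s_2$ computed in a larger group is not needed: for $n=1$ one has $R_0^L=L_2$ as an explicit set, namely $\{[1,2],[-1,2],[1,-2],[-1,-2]\}$). For $1\le j\le n-1$ let $R_j^A=\{1,\ a_j,\ a_ja_{j-1},\ \dots,\ a_j\cdots a_2,\ a_j\cdots a_2a_1,\ a_j\cdots a_2a_1^{-1}\}$ and $R_j^L=R_j^A\cup\{a_j\cdots a_2a_1^{-1}a_0,\ a_j\cdots a_2a_1^{-1}a_0a_1^{-1}\}\cup\{a_j\cdots a_2a_1^{-1}a_0a_1a_2\cdots a_k:\ 1\le k\le j\}$, where $a_j\cdots a_2$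 is the empty product when $j=1$. *)

(* Defs.v *)
From mathcomp Require Import all_boot all_order all_fingroup.
Set Implicit Arguments. Unset Strict Implicit. Unset Printing Implicit Defensive.

(* The point +k (1<=k<=m) is encoded as (Ordinal (k-1), false),
   the point -k as (Ordinal (k-1), true). *)
Definition pt (m : nat) := ('I_m * bool)%type.

Definition negpt {m} (x : pt m) : pt m := (x.1, ~~ x.2).

(* The paper's product: (sigma tau)(i) = sigma (tau i).  MathComp's
   (tau * sigma)%g applies tau first, then sigma. *)
Definition bmul {m} (s t : {perm pt m}) : {perm pt m} := (t * s)%g.

Definition bprod {m} (l : seq {perm pt m}) : {perm pt m} := foldr bmul 1%g l.

Definition signed {m} (s : {perm pt m}) : bool :=
  [forall x, s (negpt x) == negpt (s x)].

Definition Bm (m : nat) : pred {perm pt m} := fun s => signed s.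

Definition Lm (m : nat) : pred {perm pt m} := fun s =>
  signed s &&
  [exists p : {perm 'I_m}, [forall i, p i == (s (i, false)).1] && ~~ odd_perm p].

Definition flipfun {m} (P : pred 'I_m) (x : pt m) : pt m :=
  if P x.1 then negpt x else x.
Lemma flipfunK m (P : pred 'I_m) : cancel (flipfun P) (flipfun P).
Proof. by case=> i b; rewrite /flipfun /negpt /=; case E: (P i); rewrite /= ?E ?negbK. Qed.
Definition flipS {m} (P : pred 'I_m) : {perm pt m} := perm (can_inj (flipfunK P)).

Definition liftfun {m} (p : {perm 'I_m}) (x : pt m) : pt m := (p x.1, x.2).
Lemma liftfun_inj m (p : {perm 'I_m}) : injective (liftfun p).
Proof. by case=> i b [j c] [] /perm_inj -> ->. Qed.
Definition liftS {m} (p : {perm 'I_m}) : {perm pt m} := perm (@liftfun_inj m p).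

Definition s0 (n : nat) : {perm pt n.+1} := flipS (fun i : 'I_n.+1 => val i == 0).
(* s_i, 1 <= i <= n : transposition of i and i+1 (0-indexed: i-1 and i) *)
Definition sg (n i : nat) : {perm pt n.+1} :=
  liftS (tperm (inord i.-1 : 'I_n.+1) (inord i)).

Definition ag (n i : nat) : {perm pt n.+1} :=
  if i == 0 then s0 n else bmul (sg n 1) (sg n i.+1).

(* a_j a_{j-1} ... a_k  (empty product if k > j) *)
Definition adec (n k j : nat) : {perm pt n.+1} :=
  bprod [seq ag n i | i <- rev (iota k (j.+1 - k))].
Definition ainc (n k : nat) : {perm pt n.+1} :=
  bprod [seq ag n i | i <- iota 1 k].

Definition R0L (n : nat) : seq {perm pt n.+1} :=
  if n == 1 then
    [:: 1%g; flipS (fun i : 'I_n.+1 => val i == 0);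
        flipS (fun i : 'I_n.+1 => val i == 1);
        flipS (fun i : 'I_n.+1 => val i <= 1)]
  else
    [:: 1%g; ag n 0; bprod [:: ag n 1; ag n 0; ((ag n 1)^-1)%g];
        bprod [:: ag n 0; ag n 1; ag n 0; ((ag n 1)^-1)%g]%g].

Definition RjA (n j : nat) : seq {perm pt n.+1} :=
  [seq adec n k j | k <- iota 1 j.+1] ++ [:: bmul (adec n 2 j) ((ag n 1)^-1)%g].

Definition RjL (n j : nat) : seq {perm pt n.+1} :=
  let q := bmul (adec n 2 j) ((ag n 1)^-1)%g in
  RjA n j ++ [:: bmul q (ag n 0); bprod [:: q; ag n 0; ((ag n 1)^-1)%g]%g]
          ++ [seq bprod [:: q; ag n 0; ainc n k] | k <- iota 1 j].

Definition RL (n j : nat) : seq {perm pt n.+1} :=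
  if j == 0 then R0L n else RjL n j.
Arguments Bm m : clear implicits.
Arguments Lm m : clear implicits.

(* Main.v *)
Require Import Defs.
From mathcomp Require Import all_boot all_order all_fingroup zify.
Set Implicit Arguments. Unset Strict Implicit. Unset Printing Implicit Defensive.


Lemma bmulE m (s t : {perm pt m}) x : bmul s t x = s (t x).
Proof. by rewrite /bmul permM. Qed.

Lemma bprod_rcons m (l : seq {perm pt m}) x : bprod (rcons l x) = bmul (bprod l) x.
Proof.
elim: l => [|y l IH] /=; first by rewrite /bmul mul1g mulg1.
by rewrite IH /bmul mulgA.
Qed.

Lemma flipSE m (P : pred 'I_m) x : flipS P x = flipfun P x.
Proof. by rewrite /flipS permE. Qed.
Lemma liftSE m (p : {perm 'I_m}) x : liftS p x = (p x.1, x.2).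
Proof. by rewrite /liftS permE. Qed.

Definition signedP m (s : {perm pt m}) := forall x, s (negpt x) = negpt (s x).
Lemma signedPE m (s : {perm pt m}) : signed s = true <-> signedP s.
Proof. split; [move/forallP=> H x; exact/eqP/H | move=> H; apply/forallP=> x; exact/eqP/H]. Qed.

Definition absf m (s : {perm pt m}) (i : 'I_m) := (s (i, false)).1.
Definition par m (s : {perm pt m}) (b : bool) :=
  exists p : {perm 'I_m}, (forall i, p i = absf s i) /\ odd_perm p = b.
Definition fixes m k (s : {perm pt m}) := forall i : 'I_m, k < i -> s (i, false) = (i, false).

Definition good m k (s : {perm pt m}) := [/\ signedP s, par s false & fixes k s].

Lemma signed_abs m (s : {perm pt m}) i b : signedP s -> (s (i, b)).1 = absf s i.
Proof.
case: b => // H; rewrite /absf.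
by rewrite -[(i,true)]/(negpt (i,false)) H.
Qed.

Lemma signed_mul m (s t : {perm pt m}) : signedP s -> signedP t -> signedP (bmul s t).
Proof. by move=> Hs Ht x; rewrite !bmulE Ht Hs. Qed.

Lemma signed_inv m (s : {perm pt m}) : signedP s -> signedP (s^-1)%g.
Proof.
move=> Hs x; apply: (perm_inj (s := s)).
by rewrite Hs !permKV.
Qed.

Lemma signed1 m : signedP (1%g : {perm pt m}).
Proof. by move=> x; rewrite !perm1. Qed.

Lemma par_mul m (s t : {perm pt m}) b c : signedP s -> par s b -> par t c -> par (bmul s t) (b (+) c).
Proof.
move=> Hs [p [Hp op]] [q [Hq oq]]; exists (q * p)%g; split.
  move=> i; rewrite permM Hq Hp /absf bmulE; case: (t (i,false)) => a e /=.
  by rewrite (signed_abs _ e Hs).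
by rewrite odd_permM op oq addbC.
Qed.

Lemma par_inv m (s : {perm pt m}) b : signedP s -> par s b -> par (s^-1)%g b.
Proof.
move=> Hs [p [Hp op]]; exists (p^-1)%g; split; last by rewrite odd_permV.
move=> i; apply: (perm_inj (s := p)); rewrite permKV Hp /absf.
case E: ((s^-1)%g (i,false)) => [a c] /=.
by have := signed_abs a c Hs; rewrite /absf => <-; rewrite -E permKV.
Qed.

Lemma par1 m : par (1%g : {perm pt m}) false.
Proof. by exists 1%g; split; [move=> i; rewrite /absf !perm1 | rewrite odd_perm1]. Qed.

Lemma fixes_mul m k (s t : {perm pt m}) : fixes k s -> fixes k t -> fixes k (bmul s t).
Proof. by move=> Hs Ht i Hi; rewrite bmulE Ht // Hs. Qed.
Lemma fixes_inv m k (s : {perm pt m}) : fixes k s -> fixes k (s^-1)%g.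
Proof. by move=> Hs i Hi; apply: (perm_inj (s := s)); rewrite permKV Hs. Qed.
Lemma fixes1 m k : fixes k (1%g : {perm pt m}).
Proof. by move=> i _; rewrite perm1. Qed.
Lemma fixes_mono m k k' (s : {perm pt m}) : k <= k' -> fixes k s -> fixes k' s.
Proof. by move=> Hk H i Hi; apply: H; apply: leq_ltn_trans Hi. Qed.

Lemma good_mul m k (s t : {perm pt m}) : good k s -> good k t -> good k (bmul s t).
Proof.
case=> s1 s2 s3 [t1 t2 t3]; split; [exact: signed_mul|exact: (par_mul s1 s2 t2)|exact: fixes_mul].
Qed.
Lemma good_inv m k (s : {perm pt m}) : good k s -> good k (s^-1)%g.
Proof. case=> s1 s2 s3; split; [exact: signed_inv|exact: par_inv|exact: fixes_inv]. Qed.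
Lemma good1 m k : good k (1%g : {perm pt m}).
Proof. split; [exact: signed1|exact: par1|exact: fixes1]. Qed.
Lemma good_mono m k k' (s : {perm pt m}) : k <= k' -> good k s -> good k' s.
Proof. by move=> Hk [? ? ?]; split => //; apply: fixes_mono Hk _. Qed.
Lemma good_bprod m k (l : seq {perm pt m}) : (forall x, x \in l -> good k x) -> good k (bprod l).
Proof.
elim: l => [|y l IH] H /=; first exact: good1.
apply: good_mul; first by apply: H; rewrite inE eqxx.
by apply: IH => x Hx; apply: H; rewrite inE Hx orbT.
Qed.


Definition tpn (a b c : nat) := if c == a then b else if c == b then a else c.

Ltac tps := rewrite /tpn; repeat (match goal with |- context [?x == ?y] =>
   lazymatch x with context [if _ then _ else _] => fail | _ => idtac end;
   destruct (@eqP _ x y) end; rewrite /=); try (by []); try lia.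

Lemma inord_eq n a b : a <= n -> b <= n -> (inord a == inord b :> 'I_n.+1) = (a == b).
Proof.
move=> Ha Hb; apply/eqP/eqP => [H|->] //.
by rewrite -(@inordK n a) // -(@inordK n b) // H.
Qed.

Lemma tpv n a b c : a <= n -> b <= n -> c <= n ->
  tperm (inord a : 'I_n.+1) (inord b) (inord c) = inord (tpn a b c).
Proof.
move=> Ha Hb Hc; rewrite permE /= /tpn !inord_eq //.
by case: (c == a) => //; case: (c == b).
Qed.

Lemma ag_pt n i c b : 1 <= i -> i < n -> c <= n ->
  ag n i (inord c, b) = (inord (tpn 0 1 (tpn i i.+1 c)), b).
Proof.
move=> Hi Hin Hc; have Hi0 : (i == 0) = false by case: i Hi Hin.
rewrite /ag Hi0 bmulE /sg !liftSE /= tpv //; last by lia.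
rewrite tpv //; first by lia. by tps.
Qed.

Lemma ag0_pt n c b : c <= n -> ag n 0 (inord c, b) = (inord c, (c == 0) (+) b).
Proof.
move=> Hc; rewrite /ag /= /s0 flipSE /flipfun /= (@inordK n c) //.
by case: (c == 0).
Qed.

Lemma A1 n i b : 1 <= i -> i < n -> ag n i (inord i, b) = (inord i.+1, b).
Proof.
move=> Hi Hin; rewrite ag_pt //; last by lia.
congr (inord _, _); tps.
Qed.

Lemma A2 n i b : 2 <= i -> i < n -> ag n i (inord i.+1, b) = (inord i, b).
Proof.
move=> Hi Hin; rewrite ag_pt //; try lia.
congr (inord _, _); tps.
Qed.

Lemma A3 n b : 1 < n -> ag n 1 (inord 2, b) = (inord 0, b).
Proof. by move=> Hn; rewrite ag_pt. Qed.

Lemma A4 n b : 1 < n -> ag n 1 (inord 0, b) = (inord 1, b).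
Proof. by move=> Hn; rewrite ag_pt. Qed.

Lemma A0 n b : ag n 0 (inord 0, b) = (inord 0, ~~ b).
Proof. by rewrite ag0_pt. Qed.

Lemma permVE (T : finType) (s : {perm T}) x y : s x = y -> (s^-1)%g y = x.
Proof. by move=> <-; rewrite permK. Qed.

Lemma liftS_signed m (p : {perm 'I_m}) : signedP (liftS p).
Proof. by move=> [i c]; rewrite !liftSE. Qed.
Lemma liftS_par m (p : {perm 'I_m}) : par (liftS p) (odd_perm p).
Proof. by exists p; split => // i; rewrite /absf liftSE. Qed.
Lemma flipS_signed m (P : pred 'I_m) : signedP (flipS P).
Proof. by move=> [i c]; rewrite !flipSE /flipfun /=; case: (P i). Qed.
Lemma flipS_par m (P : pred 'I_m) : par (flipS P) false.
Proof.
exists 1%g; split; last exact: odd_perm1.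
by move=> i; rewrite perm1 /absf flipSE /flipfun /=; case: (P i).
Qed.
Lemma flipS_fixes m k (P : pred 'I_m) : (forall i : 'I_m, k < i -> P i = false) -> fixes k (flipS P).
Proof. by move=> H i Hi; rewrite flipSE /flipfun /= H. Qed.

Lemma ag_good n i : i < n -> good (i.+1) (ag n i).
Proof.
move=> Hin; case: i Hin => [|i] Hin.
  split; [exact: flipS_signed | exact: flipS_par | apply: flipS_fixes => j Hj].
  by apply/negbTE; rewrite -lt0n; apply: leq_trans Hj.
have Hne : forall a b, a <= n -> b <= n -> a != b -> odd_perm (tperm (inord a : 'I_n.+1) (inord b)).
  by move=> a b Ha Hb Hab; rewrite odd_tperm inord_eq.
rewrite /ag /=; split.
- apply: signed_mul; exact: liftS_signed.
- rewrite /sg /=; apply: (@par_mul _ _ _ true true); [exact: liftS_signed| |].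
    by have := liftS_par (tperm (inord 0 : 'I_n.+1) (inord 1)); rewrite Hne //; lia.
  by have := liftS_par (tperm (inord i.+1 : 'I_n.+1) (inord i.+2)); rewrite Hne //; lia.
- move=> j Hj; rewrite bmulE /sg !liftSE /=.
  have Hj' : j = inord j :> 'I_n.+1 by rewrite inord_val.
  have Hjn : (j : nat) <= n by rewrite -ltnS ltn_ord.
  by rewrite Hj' tpv //; try lia; rewrite tpv //; try (by tps).
Qed.


Lemma adec_nil n j : adec n j.+1 j = 1%g.
Proof. by rewrite /adec subnn. Qed.

Lemma adec_S n k j : k <= j.+1 -> adec n k j.+1 = bmul (ag n j.+1) (adec n k j).
Proof.
move=> Hk; rewrite /adec (subSn Hk) -[(j.+1 - k).+1]addn1 iotaD rev_cat /= subnKC //.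
Qed.

Lemma ainc_S n k : ainc n k.+1 = bmul (ainc n k) (ag n k.+1).
Proof. by rewrite /ainc -[k.+1]addn1 iotaD cats1 map_rcons bprod_rcons add1n addn1. Qed.

Lemma adec_pt n k j b : 1 <= k -> k <= j.+1 -> j < n ->
  adec n k j (inord k, b) = (inord j.+1, b).
Proof.
move=> Hk; elim: j => [|j IH] Hkj Hjn.
  have -> : k = 1 by lia.
  by rewrite adec_nil perm1.
case: (ltngtP k j.+2) => Hc; [ | lia | ].
  rewrite adec_S; last by lia.
  rewrite bmulE IH; try lia.
  rewrite A1 //; lia.
by rewrite Hc adec_nil perm1.
Qed.

Lemma ainc_pt n k b : 1 <= k -> k < n -> ainc n k (inord k.+1, b) = (inord 0, b).
Proof.
elim: k => [|k IH] // Hk Hkn.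
case: k IH Hk Hkn => [|k] IH Hk Hkn.
  by rewrite /ainc /= bmulE perm1 A3.
rewrite ainc_S bmulE A2 //; apply: IH => //; lia.
Qed.

Definition qq n j : {perm pt n.+1} := locked (bmul (adec n 2 j) ((ag n 1)^-1)%g).

Lemma qq_pt n j b : 1 <= j -> j < n -> qq n j (inord 0, b) = (inord j.+1, b).
Proof.
move=> Hj Hjn; rewrite /qq -lock bmulE (permVE (A3 _ _)); last by lia.
by rewrite adec_pt //; lia.
Qed.

Definition canon n j (p : pt n.+1) : {perm pt n.+1} :=
  let k := val p.1 in
  if ~~ p.2 then (if k == 0 then qq n j else adec n k j)
  else if k == 0 then bmul (qq n j) (ag n 0)
  else if k == 1 then bprod [:: qq n j; ag n 0; ((ag n 1)^-1)%g]
  else bprod [:: qq n j; ag n 0; ainc n k.-1].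
Arguments canon : clear implicits.

Lemma mem_adec n j k : 1 <= k <= j.+1 -> adec n k j \in RjL n j.
Proof.
move=> Hk; rewrite /RjL /RjA !mem_cat; apply/orP; left; apply/orP; left.
by apply: (map_f (fun k => adec n k j)); rewrite mem_iota; lia.
Qed.
Lemma mem_qq n j : qq n j \in RjL n j.
Proof. by rewrite /qq -lock /RjL /RjA !mem_cat !inE eqxx !orbT. Qed.
Lemma mem_qa0 n j : bmul (qq n j) (ag n 0) \in RjL n j.
Proof. by rewrite /qq -lock /RjL /RjA !mem_cat !inE eqxx !orbT. Qed.
Lemma mem_qa0a1 n j : bprod [:: qq n j; ag n 0; ((ag n 1)^-1)%g] \in RjL n j.
Proof. by rewrite /qq -lock /RjL /RjA !mem_cat !inE eqxx !orbT. Qed.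
Lemma mem_qainc n j k : 1 <= k <= j -> bprod [:: qq n j; ag n 0; ainc n k] \in RjL n j.
Proof.
move=> Hk; rewrite /qq -lock /RjL /RjA !mem_cat; apply/orP; right; apply/orP; right.
by apply: (map_f (fun k => bprod [:: bmul (adec n 2 j) ((ag n 1)^-1)%g; ag n 0; ainc n k])); rewrite mem_iota; lia.
Qed.

Lemma canon_spec n j (p : pt n.+1) : 1 <= j -> j < n -> val p.1 <= j.+1 ->
  canon n j p \in RjL n j /\ canon n j p p = (inord j.+1, false).
Proof.
case: p => i b /= Hj Hjn Hi.
have Ei : i = inord i by rewrite inord_val.
rewrite /canon /=.
case: b => /=.
- case: ifP => [/eqP H0|H0].
    split; first exact: mem_qa0.
    by rewrite bmulE Ei H0 A0 qq_pt.
  case: ifP => [/eqP H1|H1].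
    split; first exact: mem_qa0a1.
    rewrite /= !bmulE perm1 Ei H1 (permVE (A4 _ _)); last by lia.
    by rewrite A0 qq_pt.
  split.
    apply: mem_qainc; lia.
  rewrite /= !bmulE perm1.
  have Ep : (i, true) = (inord (i.-1).+1 : 'I_n.+1, true).
    by congr pair; apply: val_inj; rewrite /= inordK; lia.
  rewrite Ep ainc_pt; try lia.
  by rewrite A0 qq_pt.
- case: ifP => [/eqP H0|H0].
    split; first exact: mem_qq.
    by rewrite Ei H0 qq_pt.
  split.
    apply: mem_adec; lia.
  have := @adec_pt n i j false; rewrite -Ei => -> //; lia.
Qed.


Lemma qqE n j : bmul (adec n 2 j) ((ag n 1)^-1)%g = qq n j.
Proof. by rewrite /qq -lock. Qed.

Lemma canon_from n j (r : {perm pt n.+1}) p :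
  r p = (inord j.+1, false) -> canon n j p = r -> canon n j ((r^-1)%g (inord j.+1, false)) = r.
Proof. by move=> H1 H2; rewrite (permVE H1). Qed.

Lemma valK n k : k <= n -> val (inord k : 'I_n.+1) = k.
Proof. by move=> Hk; apply: inordK. Qed.

Lemma canon_inv n j r : 1 <= j -> j < n -> r \in RjL n j ->
  canon n j ((r^-1)%g (inord j.+1, false)) = r.
Proof.
move=> Hj Hjn; rewrite /RjL /RjA !mem_cat !qqE.
case/orP => [/orP[/mapP[k Hk ->]|]|/orP[]].
- rewrite mem_iota in Hk.
  apply: (canon_from (p := (inord k, false))); first by apply: adec_pt; lia.
  by rewrite /canon /= valK; [case: ifP => // /eqP; lia | lia].
- rewrite inE => /eqP ->.
  apply: (canon_from (p := (inord 0, false))); first by apply: qq_pt.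
  by rewrite /canon /= valK.
- rewrite !inE => /orP[] /eqP ->.
    apply: (canon_from (p := (inord 0, true))); first by rewrite bmulE A0 qq_pt.
    by rewrite /canon /= valK.
  apply: (canon_from (p := (inord 1, true))).
    by rewrite /= !bmulE perm1 (permVE (A4 _ _)); [rewrite A0 qq_pt | lia].
  by rewrite /canon /= valK /=; last lia.
- move/mapP => [k Hk ->]; rewrite mem_iota in Hk.
  apply: (canon_from (p := (inord k.+1, true))).
    by rewrite /= !bmulE perm1 ainc_pt; [rewrite A0 qq_pt | lia | lia].
  rewrite /canon /= valK; last by lia.
  by case: k Hk => [|k] Hk //=; lia.
Qed.

Lemma good_agseq n j (s : seq nat) : j < n -> (forall i, i \in s -> i <= j) ->
  good j.+1 (bprod [seq ag n i | i <- s]).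
Proof.
move=> Hjn H; apply: good_bprod => x /mapP [i Hi ->].
by apply: (good_mono (k := i.+1)); [apply: H | apply: ag_good; apply: leq_ltn_trans Hjn; apply: H].
Qed.

Lemma good_adec n k j : j < n -> good j.+1 (adec n k j).
Proof. by move=> Hjn; apply: good_agseq => // i; rewrite mem_rev mem_iota; lia. Qed.

Lemma good_ainc n k j : k <= j -> j < n -> good j.+1 (ainc n k).
Proof. by move=> Hk Hjn; apply: good_agseq => // i; rewrite mem_iota; lia. Qed.

Lemma good_ag n i j : i <= j -> j < n -> good j.+1 (ag n i).
Proof. by move=> Hi Hjn; apply: (good_mono (k := i.+1)) => //; apply: ag_good; lia. Qed.

Lemma good_qq n j : 1 <= j -> j < n -> good j.+1 (qq n j).
Proof.
move=> Hj Hjn; rewrite -qqE; apply: good_mul; first exact: good_adec.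
by apply: good_inv; apply: good_ag.
Qed.

Lemma good_RjL n j r : 1 <= j -> j < n -> r \in RjL n j -> good j.+1 r.
Proof.
move=> Hj Hjn; rewrite /RjL /RjA !mem_cat !qqE.
have g0 := good_ag (i := 0) (j := j) (leq0n _) Hjn.
have g1 := good_ag (i := 1) Hj Hjn.
have gq := good_qq Hj Hjn.
case/orP => [/orP[/mapP[k Hk ->]|]|/orP[]].
- exact: good_adec.
- by rewrite inE => /eqP ->.
- rewrite !inE => /orP[] /eqP ->; first exact: good_mul.
  by rewrite /=; repeat apply: good_mul => //; [apply: good_inv | apply: good1].
- move/mapP => [k Hk ->]; rewrite mem_iota in Hk.
  rewrite /=; repeat apply: good_mul => //; [apply: good_ainc; lia | apply: good1].
Qed.


Lemma flipS_ext m (P Q : pred 'I_m) : P =1 Q -> flipS P = flipS Q.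
Proof. by move=> H; apply/permP => x; rewrite !flipSE /flipfun H. Qed.

Lemma bprod3 m (a b c : {perm pt m}) : bprod [:: a; b; c] = bmul a (bmul b (bmul c 1%g)).
Proof. by []. Qed.

Lemma conj01 n : 1 < n ->
  bprod [:: ag n 1; ag n 0; ((ag n 1)^-1)%g] = flipS (fun i : 'I_n.+1 => val i == 1).
Proof.
move=> Hn; have H1 := @ag_pt n 1; have H0 := @ag0_pt n.
move: (ag n 1) (ag n 0) H1 H0 => a1 a0 H1 H0.
apply/permP => x.
have -> : x = a1 ((a1)^-1 x)%g by rewrite permKV.
case: ((a1)^-1 x)%g => z b.
have Hz : (z : nat) <= n by rewrite -ltnS ltn_ord.
rewrite bprod3 !bmulE perm1 permK -[z]inord_val H0 // H1 //.
rewrite flipSE /flipfun /= H1 // inordK; last by rewrite ltnS; tps.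
rewrite /negpt /=.
by rewrite /tpn; repeat (match goal with |- context [?x == ?y] =>
   lazymatch x with context [if _ then _ else _] => fail | _ => idtac end;
   destruct (@eqP _ x y) end; rewrite /=); try (by []); try lia.
Qed.

Lemma flipS_mul m (P Q : pred 'I_m) : bmul (flipS P) (flipS Q) = flipS (fun i => P i (+) Q i).
Proof.
apply/permP => [[i b]]; rewrite bmulE !flipSE /flipfun /=.
by case: (Q i); rewrite /=; case: (P i); rewrite /negpt /= ?negbK.
Qed.

Lemma flipS0 m : flipS (fun _ : 'I_m => false) = 1%g.
Proof. by apply/permP => x; rewrite flipSE perm1. Qed.

Lemma bprod4 m (a b c d : {perm pt m}) : bprod [:: a; b; c; d] = bmul a (bprod [:: b; c; d]).
Proof. by []. Qed.

Lemma R0L_eq n : 1 <= n -> R0L n = [:: 1%g; flipS (fun i : 'I_n.+1 => val i == 0);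
   flipS (fun i : 'I_n.+1 => val i == 1); flipS (fun i : 'I_n.+1 => val i <= 1)].
Proof.
case: n => [|[|n]] Hn //.
rewrite /R0L /=.
have E := @conj01 n.+2 isT; rewrite bprod3 in E.
have E0 : ag n.+2 0 = flipS (fun i : 'I_n.+3 => val i == 0) by [].
rewrite E E0 flipS_mul.
congr (_ :: _ :: _ :: [:: _]); apply: flipS_ext => i /=.
by case: (nat_of_ord i) => [|[|k]].
Qed.

Lemma perm_fix2 n (p : {perm 'I_n.+1}) : 1 <= n ->
  (forall i : 'I_n.+1, 1 < i -> p i = i) -> ~~ odd_perm p -> p = 1%g.
Proof.
move=> Hn H Hodd.
have Hle : forall i : 'I_n.+1, (i : nat) <= 1 -> (p i : nat) <= 1.
  move=> i Hi; rewrite leqNgt; apply/negP => Hpi.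
  have E := perm_inj (H _ Hpi).
  by rewrite E in Hpi; lia.
have v0 : val (inord 0 : 'I_n.+1) = 0 by apply: inordK.
have v1 : val (inord 1 : 'I_n.+1) = 1 by apply: inordK.
have Hi01 : forall i : 'I_n.+1, (i : nat) <= 1 -> i = inord 0 \/ i = inord 1.
  move=> i Hi; case: (ltnP 0 i) => Hi0; [right|left]; apply: val_inj; rewrite /= ?v0 ?v1; lia.
case: (Hi01 _ (Hle (inord 0) ltac:(by rewrite v0))) => E0.
  apply/permP => i; rewrite perm1.
  case: (ltnP 1 i) => Hi; first exact: H.
  case: (Hi01 _ Hi) => ->; first exact: E0.
  case: (Hi01 _ (Hle (inord 1) ltac:(by rewrite v1))) => // E1.
  by move: E1; rewrite -E0 => /perm_inj /(congr1 val); rewrite v0 v1.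
have Ep : p = tperm (inord 0) (inord 1).
  apply/permP => i.
  case: (ltnP 1 i) => Hi.
    rewrite H // tpermD //; apply/negP => /eqP /(congr1 val) /=; rewrite ?v0 ?v1; lia.
  case: (Hi01 _ Hi) => ->; first by rewrite E0 tpermL.
  rewrite tpermR; case: (Hi01 _ (Hle (inord 1) ltac:(by rewrite v1))) => // E1.
  by move: E1; rewrite -{2}E0 => /perm_inj /(congr1 val); rewrite v0 v1.
by move: Hodd; rewrite Ep odd_tperm; case: eqP => // /(congr1 val); rewrite v0 v1.
Qed.


Lemma good_R0L n r : 1 <= n -> r \in R0L n -> good 1 r.
Proof.
move=> Hn; rewrite R0L_eq // !inE.
have gf : forall P : pred 'I_n.+1, (forall i : 'I_n.+1, 1 < i -> P i = false) -> good 1 (flipS P).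
  by move=> P HP; split; [exact: flipS_signed | exact: flipS_par | exact: flipS_fixes].
case/or4P => /eqP ->; first exact: good1.
- by apply: gf => i Hi; rewrite /=; case: eqP => // ?; lia.
- by apply: gf => i Hi; rewrite /=; case: eqP => // ?; lia.
- by apply: gf => i Hi; rewrite /= leqNgt Hi.
Qed.

Lemma base_R0L n s : 1 <= n -> good 1 s -> s \in R0L n.
Proof.
move=> Hn [Hs [p [Hp op]] Hf].
have p1 : p = 1%g.
  apply: perm_fix2 => //; last by rewrite op.
  by move=> i Hi; rewrite Hp /absf Hf.
have Habs : forall i, (s (i, false)).1 = i by move=> i; rewrite -/(absf s i) -Hp p1 perm1.
pose c i := (s (i, false)).2.
have Es : s = flipS c.
  apply/permP => [[i b]]; rewrite flipSE /flipfun /=.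
  have E1 : s (i, false) = (i, c i) by rewrite /c; move: (Habs i); case: (s (i, false)) => a e /= ->.
  case: b.
    rewrite -[(i, true)]/(negpt (i, false)) Hs E1 /negpt /=.
    by case: (c i).
  by rewrite E1; case: (c i).
have cf : forall i : 'I_n.+1, 1 < i -> c i = false by move=> i Hi; rewrite /c Hf.
have v0 : val (inord 0 : 'I_n.+1) = 0 by apply: inordK.
have v1 : val (inord 1 : 'I_n.+1) = 1 by apply: inordK.
have Hi01 : forall i : 'I_n.+1, (i : nat) <= 1 -> i = inord 0 \/ i = inord 1.
  move=> i Hi; case: (ltnP 0 i) => Hi0; [right|left]; apply: val_inj; rewrite /= ?v0 ?v1; lia.
have key : forall P : pred 'I_n.+1, P (inord 0) = c (inord 0) -> P (inord 1) = c (inord 1) ->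
   (forall i : 'I_n.+1, 1 < i -> P i = false) -> s = flipS P.
  move=> P H0 H1 H2; rewrite Es; apply: flipS_ext => i.
  case: (ltnP 1 i) => Hi; first by rewrite H2 // cf.
  by case: (Hi01 _ Hi) => ->.
rewrite R0L_eq // !inE.
case E0: (c (inord 0)); case E1: (c (inord 1)).
- apply/or4P; constructor 4; apply/eqP; apply: key; rewrite ?v0 ?v1 //.
  by move=> i Hi; rewrite /= leqNgt Hi.
- apply/or4P; constructor 2; apply/eqP; apply: key; rewrite ?v0 ?v1 //.
  by move=> i Hi; rewrite /=; case: eqP => // ?; lia.
- apply/or4P; constructor 3; apply/eqP; apply: key; rewrite ?v0 ?v1 //.
  by move=> i Hi; rewrite /=; case: eqP => // ?; lia.
- apply/or4P; constructor 1; apply/eqP; rewrite -(flipS0 n.+1); apply: key => //.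
Qed.


Lemma good_RL n i r : 1 <= n -> i < n -> r \in RL n i -> good i.+1 r.
Proof.
rewrite /RL; case: i => [|i] Hn Hi /=; first exact: good_R0L.
exact: good_RjL.
Qed.

Lemma fixes_signed m k (s : {perm pt m}) (i : 'I_m) b : signedP s -> fixes k s -> k < i -> s (i, b) = (i, b).
Proof.
move=> Hs Hf Hi; case: b; last exact: Hf.
by rewrite -[(i, true)]/(negpt (i, false)) Hs Hf.
Qed.

Lemma main n : 1 <= n -> forall j, j < n -> forall s : {perm pt n.+1}, good j.+1 s ->
  exists f : nat -> {perm pt n.+1},
    (forall i, i <= j -> f i \in RL n i) /\ s = bprod [seq f i | i <- iota 0 j.+1] /\
    (forall g : nat -> {perm pt n.+1}, (forall i, i <= j -> g i \in RL n i) ->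
       s = bprod [seq g i | i <- iota 0 j.+1] -> forall i, i <= j -> g i = f i).
Proof.
move=> Hn; elim=> [|j IH] Hjn s Hs.
  exists (fun _ => s); split; first by move=> i; rewrite leqn0 => /eqP -> /=; exact: base_R0L.
  split; first by rewrite /= /bmul mul1g.
  move=> g _; rewrite /= /bmul mul1g => -> i; rewrite leqn0 => /eqP -> //.
set J : pt n.+1 := (inord j.+2, false).
have vJ : val (inord j.+2 : 'I_n.+1) = j.+2 by apply: inordK.
case: Hs => [Hs1 Hs2 Hs3].
set p := (s^-1)%g J.
have Hp : val p.1 <= j.+2.
  rewrite leqNgt; apply/negP => Hlt.
  have : s p = p.
    move: Hlt; case: p => i b /= Hlt; exact: (fixes_signed b Hs1 Hs3 Hlt).
  rewrite {1}/p permKV => E; move: (congr1 (fun x => val x.1) E); rewrite /= vJ => E'.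
  by move: Hlt; rewrite /= -E' ltnn.
have [Hr HrJ] := @canon_spec n j.+1 p isT Hjn Hp.
set r := canon n j.+1 p in Hr HrJ.
have gr := good_RjL (isT : 0 < j.+1) Hjn Hr.
set s' := bmul s (r^-1)%g.
have gs' : good j.+2 s' by apply: good_mul; [split | apply: good_inv].
have s'J : s' J = J by rewrite /s' bmulE (permVE HrJ) /p permKV.
have gs'1 : good j.+1 s'.
  case: gs' => a b c; split => // i Hi.
  case: (ltngtP i j.+2) => Hc; [lia | exact: c | ].
  have -> : i = inord j.+2 by apply: val_inj; rewrite /= vJ.
  exact: s'J.
have [f' [Hf'1 [Hf'2 Hf'3]]] := IH (ltnW Hjn) s' gs'1.
have Ess' : s = bmul s' r by rewrite /s' /bmul mulgA mulgV mul1g.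
exists (fun i => if i == j.+1 then r else f' i); split.
  move=> i Hi; case: eqP => [->|Hne]; first by rewrite /RL /=.
  by apply: Hf'1; lia.
have Emap : forall g : nat -> {perm pt n.+1},
    [seq g i | i <- iota 0 j.+2] = rcons [seq g i | i <- iota 0 j.+1] (g j.+1).
  by move=> g; rewrite -[j.+2]addn1 iotaD cats1 map_rcons.
split.
  rewrite Emap bprod_rcons eqxx Ess'; congr bmul; rewrite Hf'2; congr bprod.
  apply/eq_in_map => i; rewrite mem_iota => Hi; case: eqP => // E; lia.
move=> g Hg; rewrite Emap bprod_rcons => Eg.
set t := bprod [seq g i | i <- iota 0 j.+1] in Eg.
have gt : good j.+1 t.
  apply: good_bprod => x /mapP [i Hi ->]; rewrite mem_iota in Hi.
  apply: (good_mono (k := i.+1)); first lia.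
  apply: (good_RL Hn); [lia | apply: Hg; lia].
have tJ : t J = J by case: gt => _ _ c; apply: c; rewrite vJ.
have gjr : g j.+1 = r.
  have Hg1 : g j.+1 \in RjL n j.+1 by have := Hg j.+1 (leqnn _); rewrite /RL.
  rewrite -(canon_inv (isT : 0 < j.+1) Hjn Hg1).
  congr canon; apply: permVE.
  apply: (perm_inj (s := t)); rewrite tJ -bmulE -Eg /p permKV //.
have ts' : t = s' by rewrite /s' Eg -gjr /bmul mulgA mulVg mul1g.
move=> i Hi; case: eqP => [->|Hne]; first exact: gjr.
apply: Hf'3 => //; first by move=> k Hk; apply: Hg; lia.
lia.
Qed.

Unset Implicit Arguments.

Theorem theorem2p11 (n : nat) (hn : 1 <= n) (pi : {perm pt n.+1}) :
  pi \in Lm n.+1 ->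
  exists f : 'I_n -> {perm pt n.+1},
    (forall j : 'I_n, f j \in RL n j) /\
    pi = bprod [seq f j | j <- enum 'I_n] /\
    (forall g : 'I_n -> {perm pt n.+1},
       (forall j : 'I_n, g j \in RL n j) ->
       pi = bprod [seq g j | j <- enum 'I_n] ->
       forall j, g j = f j).
Proof.
move=> Hpi.
have gpi : good n pi.
  move: Hpi; rewrite unfold_in /Lm => /andP [/signedPE Hs /existsP [p /andP [/forallP Hp Hodd]]].
  split => //; first by exists p; split; [move=> i; exact/eqP/Hp | exact/negbTE].
  by move=> i Hi; move: (ltn_ord i); rewrite ltnS leqNgt Hi.
case: n hn pi Hpi gpi => [//|n] hn pi Hpi gpi.
have [f [H1 [H2 H3]]] := @main n.+1 hn n (ltnSn _) pi gpi.
have Ee : forall h : nat -> {perm pt n.+2},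
    [seq h (val j) | j <- enum 'I_n.+1] = [seq h i | i <- iota 0 n.+1].
  by move=> h; rewrite -val_enum_ord -map_comp.
exists (fun j : 'I_n.+1 => f j); split.
  by move=> j; apply: H1; rewrite -ltnS.
split; first by rewrite Ee.
move=> G HG EG j.
have HGm : forall i, i <= n -> G (inord i) \in RL n.+1 i.
  by move=> i Hi; have := HG (inord i); rewrite inordK.
have EGm : pi = bprod [seq (fun i => G (inord i)) i | i <- iota 0 n.+1].
  by rewrite -(Ee (fun i => G (inord i))) EG; congr bprod; apply: eq_map => k; rewrite /= inord_val.
have := H3 (fun i => G (inord i)) HGm EGm j; rewrite /= inord_val; apply.
by rewrite -ltnS.
Qed.
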